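(* Let $\lambda_1 \in \mathbb{R}\setminus\{0\}$ and let all constants $\mu_i$ ($i=1,\dots,7$) be arbitrary real numbers. For real functions $F,K,R$ of one variable, consider the nonlinear differential operator acting on smooth functions $w=w(z)$, $$\mathbf{F}_T[w]=\frac{d}{dz}\Big(F(w)\frac{dw}{dz}\Big)+K(w)\frac{dw}{dz}+R(w).$$ A finite-dimensional linear space $\mathbf{V}$ of functions of $z$ is called invariant under $\mathbf{F}_T$ if $\mathbf{F}_T[w]\in\mathbf{V}$ for every $w\in\mathbf{V}$. Then in each of the following five cases the two-dimensional space $\mathbf{V}_2$ (which is the solution space of a second-order linear ODE $y''+p_1(z)y'+p_0(z)y=0$ with $p_1(z)p_0(z)=0$) is invariant under $\mathbf{F}_T$: 1. $F(w)=\lambda_1^2\big(\tfrac12\mu_5w^2+\mu_6w+\mu_7\big)$, $K(w)=\lambda_1(\mu_3w+\mu_4)$, $R(w)=\mu_1w+\mu_2$, and $\mathbf{V}_2=\mathrm{Span}\{1,z\}$. 2. For $\rho_1\neq0$: $F(w)=\lambda_1^2\Big(-\frac{1}{12}\cdot\frac{-6\mu_5\rho_1\lambda_1w-\mu_1w^2+3\mu_2w}{\rho_1^2\lambda_1^2}+\mu_7\Big)$, $K(w)=\lambda_1\Big(\frac{5}{12}\frac{\mu_1w^2}{\rho_1\lambda_1}+\mu_5w+\mu_6\Big)$, $R(w)=\frac16\mu_1w^3+\frac12\mu_2w^2+\mu_3w+\mu_4$, and $\mathbf{V}_2=\mathrm{Span}\{1,e^{-\rho_1z}\}$. 3. For $\rho_0>0$: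 $F(w)=\lambda_1^2\Big(\frac{\mu_1w^2}{3\lambda_1^2\rho_0}+\mu_4\Big)$, $K(w)=\lambda_1\mu_3$, $R(w)=\mu_1w^3+\mu_2w$, and $\mathbf{V}_2=\mathrm{Span}\{\sin(\sqrt{\rho_0}z),\cos(\sqrt{\rho_0}z)\}$. 4. $F(w)=\lambda_1^2(\mu_4w+\mu_5)$, $K(w)=0$, $R(w)=\mu_2w+\mu_3$, and $\mathbf{V}_2=\mathrm{Span}\{1,(z-\mu_1)^2\}$. 5. For $\mu_1\neq0$: $F(w)=\lambda_1^2\Big(\frac{\mu_1^2\mu_3}{4\lambda_1^2}w+\mu_6\Big)$, $K(w)=0$, $R(w)=\frac12\mu_3w^2+\mu_4w+\mu_5$, and $\mathbf{V}_2=\mathrm{Span}\{1,\sin\big(\tfrac{z+\mu_2}{\mu_1}\big)\}$.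
   Context: This operator arises from the $(3+1)$-dimensional time-fractional convection-diffusion-reaction equation $\partial_t^\alpha u=\sum_{r=1}^3\partial_{x_r}(F_r(u)\partial_{x_r}u)+\sum_{r=1}^3K_r(u)\partial_{x_r}u+R(u)$ via the substitution $u(x_1,x_2,x_3,t)=w(z,t)$, $z=\lambda_1x_1+\lambda_2x_2+\lambda_3x_3$, with $F(w)=\sum_{r=1}^3\lambda_r^2F_r(w)$ and $K(w)=\sum_{r=1}^3\lambda_rK_r(w)$; the claim concerns only the resulting ordinary differential operator in $z$. *)

(* Defs.v *)
From Stdlib Require Import Reals.
From Coquelicot Require Import Coquelicot.
Open Scope R_scope.

(* Derive is Coquelicot's total derivative operator (agrees with the
   true derivative wherever it exists; all w considered here are smooth). *)
Definition FT (F K Rf : R -> R) (w : R -> R) (z : R) : R :=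
  Derive (fun y => F (w y) * Derive w y) z + K (w z) * Derive w z + Rf (w z).

Definition in_span2 (f1 f2 g : R -> R) : Prop :=
  exists c1 c2 : R, forall z : R, g z = c1 * f1 z + c2 * f2 z.

Definition invariant2 (F K Rf : R -> R) (f1 f2 : R -> R) : Prop :=
  forall w : R -> R, in_span2 f1 f2 w -> in_span2 f1 f2 (FT F K Rf w).

(* Main.v *)
Require Import Defs.
From Stdlib Require Import Reals Lra.
From Coquelicot Require Import Coquelicot.
Open Scope R_scope.
Lemma FT_compute (F F' K Rf w W1 W2 : R -> R) :
  (forall y, is_derive w y (W1 y)) -> (forall y, is_derive W1 y (W2 y)) ->
  (forall x, is_derive F x (F' x)) -> forall z,
  FT F K Rf w z = F' (w z) * W1 z ^ 2 + F (w z) * W2 z + K (w z) * W1 z + Rf (w z).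
Proof.
  intros H1 H2 H3 z. unfold FT.
  assert (Hd : forall y, Derive w y = W1 y) by (intro; apply is_derive_unique; auto).
  rewrite (Derive_ext (fun y => F (w y) * Derive w y) (fun y => F (w y) * W1 y))
    by (intro; now rewrite Hd).
  rewrite Hd.
  replace (F' (w z) * W1 z ^ 2 + F (w z) * W2 z) with
    (F' (w z) * W1 z * W1 z + F (w z) * W2 z) by ring.
  f_equal. f_equal.
  pose proof (is_derive_mult (fun y => F (w y)) W1 z _ _
    (is_derive_comp F w z _ _ (H3 _) (H1 z)) (H2 z) Rmult_comm) as D.
  apply is_derive_unique in D.
  etransitivity; [apply D|]. unfold plus, mult, scal; simpl. unfold mult; simpl. ring.
Qed.

Lemma wder (w f : R -> R) (W1 : R -> R) :
  (forall z, w z = f z) -> (forall y, is_derive f y (W1 y)) -> forall y, is_derive w y (W1 y).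
Proof. intros Hw Hf y. apply (is_derive_ext f); auto. Qed.

Lemma case1 : forall (l1 m1 m2 m3 m4 m5 m6 m7 : R), invariant2
    (fun w => l1 ^ 2 * (/ 2 * m5 * w ^ 2 + m6 * w + m7))
    (fun w => l1 * (m3 * w + m4))
    (fun w => m1 * w + m2)
    (fun _ => 1) (fun z => z).
Proof.
  intros. intros w [c1 [c2 Hw]].
  exists (l1^2*(m5*c1+m6)*c2^2 + l1*(m3*c1+m4)*c2 + m1*c1+m2),
         (l1^2*m5*c2^3 + l1*m3*c2^2 + m1*c2).
  intro z.
  rewrite (FT_compute _ (fun x => l1^2*(m5*x+m6)) _ _ w (fun _ => c2) (fun _ => 0)).
  - rewrite Hw; ring.
  - apply (wder w _ _ Hw); intro; auto_derive; auto; ring.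
  - intro; auto_derive; auto; ring.
  - intro; auto_derive; auto; field.
Qed.

Lemma case2 : forall (l1 m1 m2 m3 m4 m5 m6 m7 : R), l1 <> 0 -> (forall r1 : R, r1 <> 0 ->
    invariant2
      (fun w => l1 ^ 2 * (- (1 / 12) *
                  ((- 6 * m5 * r1 * l1 * w - m1 * w ^ 2 + 3 * m2 * w)
                     / (r1 ^ 2 * l1 ^ 2)) + m7))
      (fun w => l1 * (5 / 12 * (m1 * w ^ 2 / (r1 * l1)) + m5 * w + m6))
      (fun w => 1 / 6 * m1 * w ^ 3 + 1 / 2 * m2 * w ^ 2 + m3 * w + m4)
      (fun _ => 1) (fun z => exp (- r1 * z))).
Proof.
  intros l1 m1 m2 m3 m4 m5 m6 m7 Hl r Hr w [c1 [c2 Hw]].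
  set (F := fun w => l1 ^ 2 * (- (1 / 12) *
                  ((- 6 * m5 * r * l1 * w - m1 * w ^ 2 + 3 * m2 * w)
                     / (r ^ 2 * l1 ^ 2)) + m7)).
  set (K := fun w => l1 * (5 / 12 * (m1 * w ^ 2 / (r * l1)) + m5 * w + m6)).
  set (Rf := fun w => 1 / 6 * m1 * w ^ 3 + 1 / 2 * m2 * w ^ 2 + m3 * w + m4).
  exists (Rf c1), (c2 * (r^2 * F c1 - r * K c1 + (m1*c1^2/2 + m2*c1 + m3))).
  intro z.
  rewrite (FT_compute _ (fun x => l1^2 * (- (1/12) * ((- 6 * m5 * r * l1 - 2 * m1 * x + 3 * m2) / (r ^ 2 * l1 ^ 2))))
     _ _ w (fun y => - r * c2 * exp (- r * y)) (fun y => r^2 * c2 * exp (- r * y))).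
  - rewrite Hw; unfold F, K, Rf; field; auto.
  - apply (wder w _ _ Hw); intro; auto_derive; auto; ring.
  - intro; auto_derive; auto; ring.
  - intro; unfold F; auto_derive; auto; field; auto.
Qed.

Lemma case3 : forall (l1 m1 m2 m3 m4 m5 m6 m7 : R), l1 <> 0 -> (forall r0 : R, 0 < r0 ->
    invariant2
      (fun w => l1 ^ 2 * (m1 * w ^ 2 / (3 * l1 ^ 2 * r0) + m4))
      (fun _ => l1 * m3)
      (fun w => m1 * w ^ 3 + m2 * w)
      (fun z => sin (sqrt r0 * z)) (fun z => cos (sqrt r0 * z))).
Proof.
  intros l1 m1 m2 m3 m4 m5 m6 m7 Hl r0 Hr0.
  assert (Hs : r0 = sqrt r0 * sqrt r0) by (symmetry; apply sqrt_sqrt; lra).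
  assert (Hsp : 0 < sqrt r0) by (apply sqrt_lt_R0; lra).
  set (s := sqrt r0) in *. clearbody s. subst r0.
  intros w [c1 [c2 Hw]].
  set (k := 2/3 * m1 * (c1^2+c2^2) - s^2 * l1^2 * m4 + m2).
  exists (k * c1 - l1 * m3 * s * c2), (k * c2 + l1 * m3 * s * c1).
  intro z.
  rewrite (FT_compute _ (fun x => l1^2*(m1*(2*x)/(3*l1^2*(s*s))))
     _ _ w (fun y => s*(c1*cos(s*y) - c2*sin(s*y))) (fun y => -(s*s)*(c1*sin(s*y)+c2*cos(s*y)))).
  - rewrite Hw.
    replace ((s*(c1*cos(s*z) - c2*sin(s*z)))^2) with
      (s^2*((c1^2+c2^2) - (c1*sin(s*z)+c2*cos(s*z))^2)).
    + unfold k; field; lra.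
    + pose proof (sin2_cos2 (s*z)) as H. unfold Rsqr in H.
      replace (c1^2+c2^2) with ((c1^2+c2^2)*(sin (s*z) * sin (s*z) + cos (s*z) * cos (s*z))) by (rewrite H; ring).
      ring.
  - apply (wder w _ _ Hw); intro; auto_derive; auto; ring.
  - intro; auto_derive; auto; ring.
  - intro; auto_derive; auto; field; lra.
Qed.

Lemma case4 : forall (l1 m1 m2 m3 m4 m5 m6 m7 : R), 
  invariant2
    (fun w => l1 ^ 2 * (m4 * w + m5))
    (fun _ => 0)
    (fun w => m2 * w + m3)
    (fun _ => 1) (fun z => (z - m1) ^ 2).
Proof.
  intros. intros w [c1 [c2 Hw]].
  exists (l1^2*(m4*c1+m5)*2*c2 + m2*c1 + m3), (6*l1^2*m4*c2^2 + m2*c2).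
  intro z.
  rewrite (FT_compute _ (fun x => l1^2*m4) _ _ w (fun y => 2*c2*(y-m1)) (fun _ => 2*c2)).
  - rewrite Hw; ring.
  - apply (wder w _ _ Hw); intro; auto_derive; auto; ring.
  - intro; auto_derive; auto; ring.
  - intro; auto_derive; auto; ring.
Qed.

Lemma case5 : forall (l1 m1 m2 m3 m4 m5 m6 m7 : R), l1 <> 0 ->
  (m1 <> 0 ->
    invariant2
      (fun w => l1 ^ 2 * (m1 ^ 2 * m3 / (4 * l1 ^ 2) * w + m6))
      (fun _ => 0)
      (fun w => 1 / 2 * m3 * w ^ 2 + m4 * w + m5)
      (fun _ => 1) (fun z => sin ((z + m2) / m1))).
Proof.
  intros l1 m1 m2 m3 m4 m5 m6 m7 Hl Hm w [c1 [c2 Hw]].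
  set (F := fun w => l1 ^ 2 * (m1 ^ 2 * m3 / (4 * l1 ^ 2) * w + m6)).
  exists (m3*c2^2/4 + (1 / 2 * m3 * c1 ^ 2 + m4 * c1 + m5)),
         (c2 * (- F c1 / m1^2 + m3*c1 + m4)).
  intro z.
  rewrite (FT_compute _ (fun x => l1^2*(m1 ^ 2 * m3 / (4 * l1 ^ 2)))
     _ _ w (fun y => c2*cos((y+m2)/m1)/m1) (fun y => -c2*sin((y+m2)/m1)/(m1*m1))).
  - rewrite Hw.
    replace ((c2*cos((z+m2)/m1)/m1)^2) with (c2^2*(1 - sin((z+m2)/m1)^2)/m1^2).
    + unfold F; field; auto.
    + pose proof (sin2_cos2 ((z+m2)/m1)) as H. unfold Rsqr in H.
      replace (1 - sin ((z + m2) / m1) ^ 2) with (cos ((z + m2) / m1) ^ 2) by (simpl; lra).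
      field; auto.
  - apply (wder w _ _ Hw); intro; auto_derive; auto; unfold Rdiv; field; auto.
  - intro; auto_derive; auto; unfold Rdiv; field; auto.
  - intro; unfold F; auto_derive; auto; field; auto.
Qed.

Theorem theorem3 (l1 m1 m2 m3 m4 m5 m6 m7 : R) (Hl1 : l1 <> 0) :
  (* case 1 *)
  invariant2
    (fun w => l1 ^ 2 * (/ 2 * m5 * w ^ 2 + m6 * w + m7))
    (fun w => l1 * (m3 * w + m4))
    (fun w => m1 * w + m2)
    (fun _ => 1) (fun z => z)
  /\
  (* case 2 *)
  (forall r1 : R, r1 <> 0 ->
    invariant2
      (fun w => l1 ^ 2 * (- (1 / 12) *
                  ((- 6 * m5 * r1 * l1 * w - m1 * w ^ 2 + 3 * m2 * w)
                     / (r1 ^ 2 * l1 ^ 2)) + m7))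
      (fun w => l1 * (5 / 12 * (m1 * w ^ 2 / (r1 * l1)) + m5 * w + m6))
      (fun w => 1 / 6 * m1 * w ^ 3 + 1 / 2 * m2 * w ^ 2 + m3 * w + m4)
      (fun _ => 1) (fun z => exp (- r1 * z)))
  /\
  (* case 3 *)
  (forall r0 : R, 0 < r0 ->
    invariant2
      (fun w => l1 ^ 2 * (m1 * w ^ 2 / (3 * l1 ^ 2 * r0) + m4))
      (fun _ => l1 * m3)
      (fun w => m1 * w ^ 3 + m2 * w)
      (fun z => sin (sqrt r0 * z)) (fun z => cos (sqrt r0 * z)))
  /\
  (* case 4 *)
  invariant2
    (fun w => l1 ^ 2 * (m4 * w + m5))
    (fun _ => 0)
    (fun w => m2 * w + m3)
    (fun _ => 1) (fun z => (z - m1) ^ 2)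
  /\
  (* case 5 *)
  (m1 <> 0 ->
    invariant2
      (fun w => l1 ^ 2 * (m1 ^ 2 * m3 / (4 * l1 ^ 2) * w + m6))
      (fun _ => 0)
      (fun w => 1 / 2 * m3 * w ^ 2 + m4 * w + m5)
      (fun _ => 1) (fun z => sin ((z + m2) / m1))).
Proof.
  refine (conj (case1 l1 m1 m2 m3 m4 m5 m6 m7) (conj (case2 l1 m1 m2 m3 m4 m5 m6 m7 Hl1)
    (conj (case3 l1 m1 m2 m3 m4 m5 m6 m7 Hl1) (conj (case4 l1 m1 m2 m3 m4 m5 m6 m7)
    (case5 l1 m1 m2 m3 m4 m5 m6 m7 Hl1))))).
Qed.
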